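(* Let $\alpha\in(0,\frac{\pi}{2}]$ and let $S$ be a finite set of line segments in the plane such that any two segments of $S$ that cross do so at angle $\alpha$. Then there exists a subset $S'\subset S$ of pairwise noncrossing segments with $|S'|\geq|S|/3$.
   Context: Segments in $S$ may overlap. Two segments cross if they intersect in a single point lying in the relative interior of both (alternatively, given a set $V$ of segment endpoints, if they intersect in a single point not in $V$). Two segments cross at angle $\alpha$ if the lines containing them meet at angle $\alpha$ (equivalently $\pi-\alpha$). *)

(* Defs.v *)
From HB Require Import structures.
From mathcomp Require Import all_boot all_order all_algebra.
From mathcomp Require Import all_classical all_reals.
From mathcomp Require Import trigo.
Set Implicit Arguments. Unset Strict Implicit. Unset Printing Implicit Defensive.
Import Order.TTheory GRing.Theory Num.Theory.
Local Open Scope ring_scope.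
Local Open Scope classical_set_scope.

Section Geom.
Variable R : realType.

Definition point := (R * R)%type.
Definition segment := (point * point)%type.

Definition seg_pt (s : segment) (t : R) : point :=
  ((1 - t) * s.1.1 + t * s.2.1, (1 - t) * s.1.2 + t * s.2.2).

Definition seg_set (s : segment) : set point :=
  [set x | exists t, 0 <= t <= 1 /\ x = seg_pt s t].

Definition seg_relint (s : segment) : set point :=
  [set x | exists t, 0 < t < 1 /\ x = seg_pt s t].

Definition crosses (s s' : segment) : Prop :=
  exists x, seg_set s `&` seg_set s' = [set x] /\ seg_relint s x /\ seg_relint s' x.

Definition dir (s : segment) : point := (s.2.1 - s.1.1, s.2.2 - s.1.2).

Definition vnorm (u : point) : R := Num.sqrt (u.1 ^+ 2 + u.2 ^+ 2).

(* angle in [0, pi/2] between the lines containing s and s' *)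
Definition line_angle (s s' : segment) : R :=
  acos (`|(dir s).1 * (dir s').1 + (dir s).2 * (dir s').2|
        / (vnorm (dir s) * vnorm (dir s'))).

Definition crosses_at (alpha : R) (s s' : segment) : Prop :=
  crosses s s' /\ (line_angle s s' = alpha \/ line_angle s s' = pi - alpha).

Definition same_segment (s s' : segment) : Prop :=
  (s.1 = s'.1 /\ s.2 = s'.2) \/ (s.1 = s'.2 /\ s.2 = s'.1).

End Geom.

(* Main.v *)
Require Import Defs.
From mathcomp Require Import all_boot all_order.
From mathcomp Require Import zify.
Set Implicit Arguments. Unset Strict Implicit. Unset Printing Implicit Defensive.

Lemma indep (I : finType) (P H : rel I)
 (Prefl: reflexive P) (Psym: symmetric P) (Ptr: transitive P)
 (HnP: forall i j, H i j -> ~~ P i j)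
 (Hsym: symmetric H)
 (Hcomp: forall i i' j, P i i' -> H i j -> H i' j)
 (Hdeg: forall i a b c, H i a -> H i b -> H i c -> [|| P a b, P a c | P b c]) :
 forall T : {set I}, exists S' : {set I},
   [/\ S' \subset T, (forall i j, i \in S' -> j \in S' -> ~~ H i j) & #|T| <= 3 * #|S'|].
Proof.
move=> T; move: {2}#|T| (leqnn #|T|) => n; elim: n T => [|n IH] T hT.
  exists (set0 : {set I}); split; [exact: sub0set | by move=> ? ?; rewrite inE | rewrite cards0; lia].
case: (set_0Vmem T) => [->|[i0 i0T]].
  exists (set0 : {set I}); split; [exact: sub0set | by move=> ? ?; rewrite inE | by rewrite cards0].
pose cls j := [set k in T | P j k].
have [i iT imax] := @arg_maxnP I i0 (mem T) (fun j => #|cls j|) i0T.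
set K := cls i; set N := [set j in T | H i j].
set Rest := T :\: (K :|: N).
have iK : i \in K by rewrite inE Prefl andbT; exact: iT.
have KT : K \subset T by apply/subsetP => k; rewrite inE => /andP[].
have NT : N \subset T by apply/subsetP => k; rewrite inE => /andP[].
have hR : #|Rest| <= n.
  have : #|Rest| < #|T|.
    apply: proper_card; apply/properP; split; first exact: subsetDl.
    by exists i => //; rewrite inE inE iK.
  lia.
have [S0 [S0R S0ind S0c]] := IH Rest hR.
have S0sub : forall j, j \in S0 -> j \in T /\ j \notin K /\ j \notin N.
  move=> j /(subsetP S0R); rewrite !inE negb_or => /andP[/andP[h1 h2] h3]; by split.
have Nle : #|N| <= 2 * #|K|.
  case: (set_0Vmem N) => [->|[a aN]]; first by rewrite cards0.
  have aT : a \in T by move: aN; rewrite inE => /andP[].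
  have Hia : H i a by move: aN; rewrite inE => /andP[].
  have ca := imax a aT.
  case: (boolP [forall j in N, P a j]) => hall.
    have : N \subset cls a.
      apply/subsetP => j jN; rewrite inE (subsetP NT j jN) /=.
      by move/forall_inP: hall; apply.
    move/subset_leq_card => h; move: ca; rewrite -/K; lia.
  move: hall; rewrite negb_forall_in => /existsP[b /andP[bN nab]].
  have bT : b \in T by move: bN; rewrite inE => /andP[].
  have Hib : H i b by move: bN; rewrite inE => /andP[].
  have cb := imax b bT.
  have : N \subset cls a :|: cls b.
    apply/subsetP => j jN; have jT := subsetP NT j jN.
    have Hij : H i j by move: jN; rewrite inE => /andP[].
    have := Hdeg i a b j Hia Hib Hij; rewrite (negbTE nab) /= => /orP[] h;
      by rewrite !inE jT h ?orbT.
  move/subset_leq_card => h; move: ca cb; rewrite -/K; have := cardsU (cls a) (cls b); lia.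
exists (K :|: S0); split.
- rewrite subUset KT /=; apply/subsetP => j /S0sub; by case.
- have cross : forall a b, a \in K -> b \in S0 -> ~~ H a b.
    move=> a b aK bS; apply/negP => Hab.
    have Pia : P i a by move: aK; rewrite inE => /andP[].
    have Pai : P a i by rewrite Psym.
    have Hib := Hcomp a i b Pai Hab.
    have [bT [_ bN]] := S0sub b bS.
    by move: bN; rewrite inE bT Hib.
  move=> a b; rewrite !in_setU => /orP[aK|aS] /orP[bK|bS].
  + have Pia : P i a by move: aK; rewrite inE => /andP[].
    have Pib : P i b by move: bK; rewrite inE => /andP[].
    apply/negP => /HnP; rewrite (Ptr i) // Psym //.
  + exact: cross.
  + by rewrite Hsym; apply: cross.
  + exact: S0ind.
- have disj : [disjoint K & S0].
    rewrite -setI_eq0; apply/eqP/setP => j; rewrite in_setI in_set0.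
    apply/negP => /andP[jK /S0sub [_ [h _]]]; by rewrite jK in h.
  have cU : #|K :|: S0| = #|K| + #|S0|.
    by have := cardsU K S0; move: disj; rewrite -setI_eq0 => /eqP ->; rewrite cards0; lia.
  have KNT : K :|: N \subset T by rewrite subUset KT NT.
  have cT : #|T| = #|K :|: N| + #|Rest|.
    rewrite /Rest -(cardsID (K :|: N) T); congr (_ + _).
    by rewrite (setIidPr KNT).
  have := cardsU K N; lia.
Qed.

From HB Require Import structures.
From mathcomp Require Import all_boot all_order all_algebra.
From mathcomp Require Import all_classical all_reals.
From mathcomp Require Import trigo.
From mathcomp Require Import ring lra.
Import Order.TTheory GRing.Theory Num.Theory.

Local Open Scope ring_scope.

Section G.
Variable R : realType.
Implicit Types u v w : (R * R)%type.

Definition dotp u v := u.1 * v.1 + u.2 * v.2.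
Definition crsp u v := u.1 * v.2 - u.2 * v.1.
Definition n2 u := u.1 ^+ 2 + u.2 ^+ 2.

Lemma lagr u v : dotp u v ^+ 2 + crsp u v ^+ 2 = n2 u * n2 v.
Proof. rewrite /dotp /crsp /n2; ring. Qed.

Lemma n2_ge0 u : 0 <= n2 u.
Proof. rewrite /n2; nra. Qed.

Lemma crsp_trans u v w : n2 v != 0 -> crsp u v = 0 -> crsp v w = 0 -> crsp u w = 0.
Proof.
move=> nv h1 h2.
have e : n2 v * crsp u w = dotp v w * crsp u v + dotp v u * crsp v w.
  rewrite /n2 /dotp /crsp; ring.
move: e; rewrite h1 h2 !mulr0 addr0 => /eqP; rewrite mulf_eq0 (negbTE nv) /=.
by move/eqP.
Qed.

Lemma crsp_sym u v : crsp v u = - crsp u v.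
Proof. rewrite /crsp; ring. Qed.

Lemma comp_par (k : R) u u' v : n2 u != 0 -> crsp u u' = 0 ->
  dotp u v ^+ 2 = k * n2 u * n2 v -> dotp u' v ^+ 2 = k * n2 u' * n2 v.
Proof.
move=> nu h1 h2.
have e : n2 u ^+ 2 * (dotp u' v ^+ 2 - k * n2 u' * n2 v) =
  dotp u u' ^+ 2 * (dotp u v ^+ 2 - k * n2 u * n2 v) +
  crsp u u' * (2 * dotp u u' * dotp u v * crsp u v + crsp u u' * crsp u v ^+ 2
     - k * n2 u * n2 v * crsp u u').
  rewrite /n2 /dotp /crsp; ring.
move: e; rewrite h1 h2 subrr !mulr0 mul0r addr0 => /eqP.
rewrite mulf_eq0 expf_eq0 (negbTE nu) /= subr_eq0 => /eqP //.
Qed.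

Lemma three (k : R) u a b c : n2 u ^+ 2 != k * n2 u * n2 u ->
  dotp u a ^+ 2 = k * n2 u * n2 a ->
  dotp u b ^+ 2 = k * n2 u * n2 b ->
  dotp u c ^+ 2 = k * n2 u * n2 c ->
  [|| crsp a b == 0, crsp a c == 0 | crsp b c == 0].
Proof.
move=> nu ha hb hc.
pose Q w := dotp u w ^+ 2 - k * n2 u * n2 w.
have e : Q u * (crsp a b * crsp a c * crsp b c) =
  Q a * crsp u b * crsp u c * crsp b c - Q b * crsp u a * crsp u c * crsp a c
  + Q c * crsp u a * crsp u b * crsp a b.
  rewrite /Q /n2 /dotp /crsp; ring.
have Qa : Q a = 0 by rewrite /Q ha subrr.
have Qb : Q b = 0 by rewrite /Q hb subrr.
have Qc : Q c = 0 by rewrite /Q hc subrr.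
move: e; rewrite Qa Qb Qc !mul0r subrr addr0 => /eqP.
rewrite !mulf_eq0 -orbA => /orP[|//].
have -> : Q u = n2 u ^+ 2 - k * n2 u * n2 u.
  by rewrite /Q /dotp /n2; ring.
by rewrite subr_eq0 (negbTE nu).
Qed.

Lemma c2_ne1 (alpha : R) : 0 < alpha <= pi / 2 -> cos alpha ^+ 2 != 1.
Proof.
move=> /andP[a0 a1]; apply/negP => /eqP h.
have hpi := @pi_gt0 R.
have aI : alpha \in `[0, pi] by rewrite in_itv /= ltW //=; lra.
have := cosK aI.
have : cos alpha = 1 \/ cos alpha = -1.
  have : (cos alpha - 1) * (cos alpha + 1) = 0.
    by rewrite (_ : _ * _ = cos alpha ^+ 2 - 1); [rewrite h subrr | ring].
  by move/eqP; rewrite mulf_eq0 subr_eq0 addr_eq0 => /orP[/eqP|/eqP]; [left|right].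
case=> ->; [rewrite acos1 | rewrite acosN1] => e; lra.
Qed.

Lemma angle_alg (alpha : R) (s s' : segment R) :
  n2 (dir s) != 0 -> n2 (dir s') != 0 -> 0 < alpha <= pi / 2 ->
  (line_angle s s' = alpha \/ line_angle s s' = pi - alpha) ->
  dotp (dir s) (dir s') ^+ 2 = cos alpha ^+ 2 * n2 (dir s) * n2 (dir s').
Proof.
move=> nu nv ha hl.
set u := dir s in nu hl *; set v := dir s' in nv hl *.
set d := dotp u v.
have pu : 0 < n2 u by rewrite lt0r nu n2_ge0.
have pv : 0 < n2 v by rewrite lt0r nv n2_ge0.
have sp : 0 < vnorm u * vnorm v by rewrite mulr_gt0 // sqrtr_gt0.
set x := `|d| / (vnorm u * vnorm v).
have hl' : acos x = alpha \/ acos x = pi - alpha by exact: hl.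
have xs : x * (vnorm u * vnorm v) = `|d| by rewrite /x divfK // gt_eqF.
have x0 : 0 <= x by rewrite /x divr_ge0 // ltW.
have vv : vnorm u * vnorm v = Num.sqrt (n2 u * n2 v) by rewrite sqrtrM // ltW.
have x1 : x <= 1.
  rewrite /x ler_pdivrMr // mul1r vv -sqrtr_sqr ler_sqrt; last by rewrite mulr_ge0 // ltW.
  by rewrite -(lagr u v) lerDl sqr_ge0.
have cx : cos (acos x) = x by rewrite acosK // in_itv /=; apply/andP; split => //; lra.
have x2 : x ^+ 2 = cos alpha ^+ 2.
  case: hl' => e; rewrite -cx e //.
  by rewrite cosB cospi sinpi; ring.
have : (x * (vnorm u * vnorm v)) ^+ 2 = d ^+ 2 by rewrite xs real_normK // num_real.
rewrite exprMn x2 vv sqr_sqrtr; last by rewrite mulr_ge0 // ltW.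
by move=> <-; rewrite mulrA.
Qed.

End G.

Lemma n2_dir_neq0 (R : realType) (s : segment R) : s.1 <> s.2 -> n2 (dir s) != 0.
Proof.
move=> ne; apply/negP; rewrite /n2 paddr_eq0 ?sqr_ge0 // !sqrf_eq0 /dir /= !subr_eq0.
move=> /andP[/eqP h1 /eqP h2]; apply: ne.
by case: s h1 h2 => [[a b] [c d]] /= -> ->.
Qed.

Theorem corollary16 (R : realType) (alpha : R) (S : seq (segment R))
  (halpha : 0 < alpha <= pi / 2)
  (hnondeg : forall i : 'I_(size S), (S`_i).1 <> (S`_i).2)
  (hdistinct : forall i j : 'I_(size S), i != j -> ~ same_segment S`_i S`_j)
  (hangle : forall i j : 'I_(size S),
      crosses S`_i S`_j -> crosses_at alpha S`_i S`_j) :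
  exists S' : {set 'I_(size S)},
    (forall i j, i \in S' -> j \in S' -> ~ crosses S`_i S`_j) /\
    (size S <= 3 * #|S'|)%N.
Proof.
set k := cos alpha ^+ 2.
have k1 : k != 1 by exact: c2_ne1.
pose V (i : 'I_(size S)) := dir S`_i.
have nz : forall i, n2 (V i) != 0 by move=> i; apply: n2_dir_neq0.
pose P := fun i j => crsp (V i) (V j) == 0.
pose H := fun i j => (crsp (V i) (V j) != 0) && (dotp (V i) (V j) ^+ 2 == k * n2 (V i) * n2 (V j)).
have Prefl : reflexive P by move=> i; rewrite /P /crsp mulrC subrr.
have Psym : symmetric P by move=> i j; rewrite /P crsp_sym oppr_eq0.
have Ptr : transitive P.
  move=> j i l; rewrite /P => /eqP h1 /eqP h2; apply/eqP.
  exact: (crsp_trans (nz j) h1 h2).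
have HnP : forall i j, H i j -> ~~ P i j by move=> i j /andP[].
have Hsym : symmetric H.
  move=> i j; rewrite /H crsp_sym oppr_eq0 /dotp (mulrC (V i).1) (mulrC (V i).2).
  by rewrite -!mulrA (mulrC (n2 (V i))).
have Hcomp : forall i i' j, P i i' -> H i j -> H i' j.
  move=> i i' j; rewrite /P /H => /eqP hp /andP[hc /eqP hd]; apply/andP; split.
    apply/negP => /eqP h; move/negP: hc; apply; apply/eqP.
    exact: (crsp_trans (nz i') hp h).
  by apply/eqP; apply: (comp_par (nz i) hp hd).
have Hdeg : forall i a b c, H i a -> H i b -> H i c -> [|| P a b, P a c | P b c].
  move=> i a b c /andP[_ /eqP ha] /andP[_ /eqP hb] /andP[_ /eqP hc].
  apply: (three _ ha hb hc).
  apply/negP => /eqP h.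
  have e : (k - 1) * n2 (V i) ^+ 2 = k * n2 (V i) * n2 (V i) - n2 (V i) ^+ 2 by ring.
  move: e; rewrite -h subrr => /eqP; rewrite mulf_eq0 expf_eq0 (negbTE (nz i)) subr_eq0 orbF.
  by rewrite (negbTE k1).
have crH : forall i j : 'I_(size S), crosses S`_i S`_j -> H i j.
  move=> i j /hangle [_ hl].
  have hd := angle_alg (nz i) (nz j) halpha hl.
  rewrite /H -/(V i) -/(V j) -/k in hd *.
  rewrite hd eqxx andbT; apply/negP => /eqP h0.
  have := lagr (V i) (V j); rewrite h0 expr0n /= addr0 hd => e.
  have : (k - 1) * (n2 (V i) * n2 (V j)) = 0 by rewrite mulrBl mulrA e mul1r subrr.
  move/eqP; rewrite !mulf_eq0 (negbTE (nz i)) (negbTE (nz j)) subr_eq0 orbF.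
  by rewrite (negbTE k1).
have [S' [_ ind card]] := indep Prefl Psym Ptr HnP Hsym Hcomp Hdeg (finset.setT : {set 'I_(size S)}).
exists S'; split.
  by move=> i j iS jS /crH hij; move: (ind i j iS jS); rewrite hij.
by move: card; rewrite cardsT card_ord.
Qed.
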